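(* Let $A$ be a finite involutive alphabet and let $\Gamma$ be a rooted involutive $A$-tree. Then $\Gamma$ is deterministic and context-free if and only if $\Gamma$ is isomorphic, as a rooted involutive $A$-graph (without node labels), to $\Gamma(p)$ for some state $p$ of a reduced pDFA over $A$.
   Context: An $A$-graph is a pair $(V,E)$ with $E\subseteq V\times A\times V$; it is deterministic if $(u,a,v),(u,a,v')\in E$ imply $v=v'$; it is involutive if $(u,a,v)\in E\iff(v,a^{-1},u)\in E$. A path is reduced if no edge in it is immediately followed by its inverse; a rooted involutive graph is a tree if each vertex is the end of a unique reduced path from the root. Context-free: for a connected rooted involutive graph, the level of a node is its distance from the root; for $v$ at level $n$ the end-cone $\Gamma(v)$ is the connected component containing $v$ of the subgraph induced on nodes of level $\ge n$, and its nodes of level $n$ are its frontier points. An end-isomorphism is a label-preserving graph isomorphism between two end-cones mapping frontier points onto frontier points. A connected involutive $A$-graph ($A$ finite involutive) is context-free if it has uniformly bounded degree and for some choice of root there are only finitely many end-isomorphism classes of end-cones. A partial deterministic finite automaton (pDFA) over a finite alphabet $A$ is a finite deterministic $A$-graph $(Q,T)$ (states and transitions). For a state $p$, $\Gamma(p)$ is the graph whose nodes are the runs (finite paths) of the pDFA starting at $p$, with the empty run as root and an edge from a run $\varrho$ to $\varrho\tau$ labeled by the label of the transition $\tau$, then closed under adding all inverse edges $(v,a^{-1},u)$ (viewing $A$ as involutive, passing to $A^{\pm1}=A\uplus A^{-1}$ if necessary). A pDFA over an involutive alphabet is reduced if it contains no path labeled $aa^{-1}$ for any $a\in A$. *)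

(* Defs.v *)
From mathcomp Require Import all_boot.
Set Implicit Arguments. Unset Strict Implicit. Unset Printing Implicit Defensive.

Section Graphs.
Variables (A : finType) (inv : A -> A).

Variables (V : Type) (E : V -> A -> V -> Prop).

Definition deterministic : Prop :=
  forall u a v v', E u a v -> E u a v' -> v = v'.

Definition involutive_graph : Prop :=
  forall u a v, E u a v <-> E v (inv a) u.

Fixpoint is_path_from (u : V) (p : seq (V * A * V)) : Prop :=
  match p with
  | [::] => True
  | (x, a, y) :: p' => x = u /\ E x a y /\ is_path_from y p'
  end.

Fixpoint path_end (u : V) (p : seq (V * A * V)) : V :=
  match p with
  | [::] => u
  | (_, _, y) :: p' => path_end y p'
  end.

Fixpoint reduced_path (p : seq (V * A * V)) : Prop :=
  match p with
  | (x, a, y) :: (((y', b, z) :: _) as p') =>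
      ~ (y' = y /\ b = inv a /\ z = x) /\ reduced_path p'
  | _ => True
  end.

Definition is_tree (r : V) : Prop :=
  forall v, exists! p, [/\ is_path_from r p, reduced_path p & path_end r p = v].

Inductive walk : V -> V -> nat -> Prop :=
  | walk0 v : walk v v 0
  | walkS u a w v n : E u a w -> walk w v n -> walk u v n.+1.

Definition level (r v : V) (n : nat) : Prop :=
  walk r v n /\ forall m, walk r v m -> n <= m.

Inductive walk_in (P : V -> Prop) : V -> V -> Prop :=
  | walk_in0 v : P v -> walk_in P v v
  | walk_inS u a w v : P u -> E u a w -> walk_in P w v -> walk_in P u v.

(* w is a node of the end-cone Gamma(v) (w.r.t. root r) *)
Definition in_cone (r v w : V) : Prop :=
  exists n, level r v n /\
    walk_in (fun x => exists k, level r x k /\ n <= k) v w.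

Definition frontier (r v w : V) : Prop :=
  in_cone r v w /\ exists n, level r v n /\ level r w n.

Definition end_isomorphic (r v v' : V) : Prop :=
  exists (f g : V -> V),
    [/\ forall x, in_cone r v x -> in_cone r v' (f x) /\ g (f x) = x,
        forall y, in_cone r v' y -> in_cone r v (g y) /\ f (g y) = y,
        forall x a y, in_cone r v x -> in_cone r v y ->
          (E x a y <-> E (f x) a (f y))
      & forall x, in_cone r v x -> (frontier r v x <-> frontier r v' (f x))].

(* Uniformly bounded degree: at most N distinct pairs (a,v) with (u,a,v) in E. *)
Definition bounded_degree : Prop :=
  exists N : nat, forall (u : V) (n : nat) (h : 'I_n -> A * V),
    injective h -> (forall i, E u (h i).1 (h i).2) -> n <= N.

Definition context_free : Prop :=
  bounded_degree /\
  exists r : V, exists (n : nat) (rep : 'I_n -> V),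
    forall v, exists i, end_isomorphic r v (rep i).

End Graphs.

Section PDFA.
Variables (A : finType) (inv : A -> A).

Variables (Q : finType) (T : Q -> A -> option Q).

Definition reduced_pdfa : Prop :=
  forall q1 q2 q3 a, T q1 a = Some q2 -> T q2 (inv a) = Some q3 -> False.

Fixpoint is_run (q : Q) (s : seq (Q * A * Q)) : bool :=
  match s with
  | [::] => true
  | (q1, a, q2) :: s' => [&& q1 == q, T q1 a == Some q2 & is_run q2 s']
  end.

Definition run (p : Q) := {s : seq (Q * A * Q) | is_run p s}.

Definition run_root (p : Q) : run p := exist _ [::] isT.

(* Gamma(p): edge rho -> rho tau labelled by the label of tau, closed under
   inverse edges. *)
Definition run_edge (p : Q) (x : run p) (a : A) (y : run p) : Prop :=
  (exists tau : Q * A * Q, sval y = rcons (sval x) tau /\ tau.1.2 = a) \/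
  (exists tau : Q * A * Q, sval x = rcons (sval y) tau /\ inv tau.1.2 = a).

End PDFA.

Definition rooted_iso (A : finType) (V W : Type)
  (E : V -> A -> V -> Prop) (r : V) (F : W -> A -> W -> Prop) (s : W) : Prop :=
  exists (f : V -> W) (g : W -> V),
    [/\ cancel f g, cancel g f, f r = s &
        forall u a v, E u a v <-> F (f u) a (f v)].

(* Main.v *)
Require Import Defs.
From mathcomp Require Import all_boot zify.
From Stdlib Require Import Classical ClassicalEpsilon.
Set Implicit Arguments. Unset Strict Implicit. Unset Printing Implicit Defensive.

Lemma seq_lastP (T : Type) (s : seq T) : s = [::] \/ exists p e, s = rcons p e.
Proof. by case/lastP: s => [|p e]; [left | right; exists p, e]. Qed.

Lemma run_eq (A Q : finType) (T : Q -> A -> option Q) q (s1 s2 : run T q) :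
  sval s1 = sval s2 -> s1 = s2.
Proof. by case: s1 s2 => [s1 H1] [s2 H2] /= Hs; subst; congr exist; apply: bool_irrelevance. Qed.

Section Paths.
Variables (A : finType) (inv : A -> A) (V : Type) (E : V -> A -> V -> Prop).

Lemma path_rcons (u : V) p x a y :
  is_path_from E u (rcons p (x,a,y)) <-> [/\ is_path_from E u p, x = path_end u p & E x a y].
Proof.
elim: p u => [|[[x0 a0] y0] p IH] u /=.
  by split; [case=> -> [H _] | case=> _ -> H].
rewrite IH; split; [case=> -> [H [? ? ?]] | case=> [[-> [H ?]] ? ?]]; by [].
Qed.

Lemma path_end_rcons (u : V) p x (a : A) y : path_end u (rcons p (x,a,y)) = y.
Proof. by elim: p u => [|[[x0 a0] y0] p IH] u //=. Qed.

Lemma path_end_cat (u : V) (p q : seq (V*A*V)) : path_end u (p ++ q) = path_end (path_end u p) q.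
Proof. by elim: p u => [|[[x0 a0] y0] p IH] u //=. Qed.

Lemma path_cat (u : V) p q : is_path_from E u (p ++ q) <-> is_path_from E u p /\ is_path_from E (path_end u p) q.
Proof.
elim: p u => [|[[x0 a0] y0] p IH] u /=; first by split; [|case].
rewrite IH; split; [case=> -> [H [? ?]] | case=> [[-> [H ?]] ?]]; by [].
Qed.

Lemma red_cat (p q : seq (V*A*V)) : reduced_path inv (p ++ q) -> reduced_path inv p.
Proof.
elim: p => [|e1 p IH] //=.
case: p IH => [|e2 p] IH /=; first by case: e1 => [[? ?] ?].
case: e1 => [[x a] y]; case: e2 IH => [[x' b] z] IH /=.
by case=> H1 H2; split => //; apply: IH.
Qed.

Lemma red_rcons_l (p : seq (V*A*V)) e : reduced_path inv (rcons p e) -> reduced_path inv p.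
Proof. rewrite -cats1; exact: red_cat. Qed.

Lemma red_rcons (p : seq (V*A*V)) x a y : reduced_path inv p ->
  reduced_path inv (rcons p (x,a,y)) \/
  exists p0 x0 b, p = rcons p0 (x0,b,x) /\ a = inv b /\ y = x0.
Proof.
case: p => [|e1 p] //=; first by left.
elim: p e1 => [|e2 p IH] e1 /=.
  case: e1 => [[x0 b] y0] _.
  case: (classic (x = y0 /\ a = inv b /\ y = x0)) => H.
    right; exists [::], x0, b; case: H => -> [-> ->]; by [].
  by left.
case: e1 => [[x1 b1] y1]; case: e2 IH => [[x2 b2] y2] IH /= [H1 H2].
case: (IH (x2,b2,y2) H2) => [H|[p0 [x0 [b [H [-> ->]]]]]].
  by left; split.
right; exists ((x1,b1,y1) :: p0), x0, b; by rewrite H.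
Qed.

End Paths.

Section Tree.
Variables (A : finType) (inv : A -> A).
Hypothesis inv_invol : involutive inv.
Variables (V : Type) (E : V -> A -> V -> Prop) (r : V).
Hypothesis HE : involutive_graph inv E.
Hypothesis Htree : is_tree inv E r.

Lemma HE1 u a v : E u a v -> E v (inv a) u.
Proof. exact: (proj1 (HE u a v)). Qed.
Lemma HE2 u a v : E v (inv a) u -> E u a v.
Proof. exact: (proj2 (HE u a v)). Qed.

Definition treeP (v : V) (p : seq (V*A*V)) :=
  [/\ is_path_from E r p, reduced_path inv p & path_end r p = v].

Definition Pth_sig (v : V) : {p | treeP v p /\ forall q, treeP v q -> p = q} :=
  constructive_indefinite_description _ (Htree v).

Definition Pth v := proj1_sig (Pth_sig v).

Lemma Pth_spec v : [/\ is_path_from E r (Pth v), reduced_path inv (Pth v) & path_end r (Pth v) = v].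
Proof. by case: (proj2_sig (Pth_sig v)). Qed.

Lemma Pth_end v : path_end r (Pth v) = v.
Proof. by case: (Pth_spec v). Qed.

Lemma Pth_uniq p : is_path_from E r p -> reduced_path inv p -> p = Pth (path_end r p).
Proof.
move=> H1 H2; rewrite /Pth; case: (proj2_sig (Pth_sig (path_end r p))) => _ H.
by rewrite (H p).
Qed.

Lemma Pth_inj u v : Pth u = Pth v -> u = v.
Proof. by move=> H; rewrite -(Pth_end u) H Pth_end. Qed.

Lemma Pth_r : Pth r = [::].
Proof. by rewrite [RHS](@Pth_uniq [::]). Qed.

Lemma Pth_rcons v p x a y : Pth v = rcons p (x,a,y) ->
  [/\ Pth x = p, x = path_end r p, y = v & E x a y].
Proof.
move=> H; case: (Pth_spec v); rewrite H path_rcons path_end_rcons.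
case=> Hp Hx He Hr Hy; split => //.
by rewrite Hx -Pth_uniq //; apply: red_rcons_l Hr.
Qed.

Lemma edge_Pth u a w : E u a w ->
  Pth w = rcons (Pth u) (u,a,w) \/ Pth u = rcons (Pth w) (w, inv a, u).
Proof.
move=> He; case: (Pth_spec u) => Hp Hr Hend.
case: (red_rcons u a w Hr) => [H|[p0 [x0 [b [Hu [Ha Hw]]]]]].
  left; rewrite (@Pth_uniq (rcons (Pth u) (u,a,w))) ?path_end_rcons //.
  by rewrite path_rcons Hend.
right; case: (Pth_rcons Hu) => H1 H2 _ _.
by rewrite Hu Hw H1 Ha inv_invol.
Qed.

Definition dep v := size (Pth v).

Lemma dep_r : dep r = 0.
Proof. by rewrite /dep Pth_r. Qed.

Lemma dep_edge u a w : E u a w -> dep w = (dep u).+1 \/ dep u = (dep w).+1.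
Proof. by rewrite /dep => /edge_Pth [] ->; rewrite size_rcons; [left|right]. Qed.

Definition D u a w := E u a w /\ dep w = (dep u).+1.

Lemma D_Pth u a w : D u a w -> Pth w = rcons (Pth u) (u,a,w).
Proof.
by case=> /edge_Pth [] // H; rewrite /dep H size_rcons; lia.
Qed.

Lemma up_Pth u a w : E u a w -> dep u = (dep w).+1 -> Pth u = rcons (Pth w) (w, inv a, u).
Proof. by move=> /edge_Pth [] // H; rewrite /dep H size_rcons; lia. Qed.

Lemma D_E u a w : D u a w -> E u a w. Proof. by case. Qed.

Definition sub v x := exists s, Pth x = Pth v ++ s.

Lemma sub_refl v : sub v v. Proof. by exists [::]; rewrite cats0. Qed.

Lemma sub_dep v x : sub v x -> dep v <= dep x /\ (x <> v -> dep v < dep x).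
Proof.
case=> s H; rewrite /dep H size_cat; split; first by lia.
case: s H => [|e s] H Hne; last by rewrite /=; lia.
by exfalso; apply: Hne; apply: Pth_inj; rewrite H cats0.
Qed.

Lemma sub_D v x a y : sub v x -> D x a y -> sub v y.
Proof. by case=> s H /D_Pth Hy; exists (rcons s (x,a,y)); rewrite Hy H rcons_cat. Qed.

Lemma sub_edge_out v x a y : sub v x -> E x a y -> ~ sub v y ->
  x = v /\ Pth v = rcons (Pth y) (y, inv a, v).
Proof.
case=> s Hs He Hn; case: (edge_Pth He) => H.
  by exfalso; apply: Hn; exists (rcons s (x,a,y)); rewrite H Hs rcons_cat.
case/lastP: s Hs => [|s e] Hs.
  by rewrite cats0 in Hs; have Hx := Pth_inj Hs; subst x; split.
by exfalso; apply: Hn; exists s; move: H; rewrite Hs -rcons_cat => /rcons_inj [].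
Qed.

Fixpoint dpath (u : V) (p : seq (V*A*V)) : Prop :=
  match p with
  | [::] => True
  | (x, a, y) :: p' => x = u /\ D x a y /\ dpath y p'
  end.

Lemma dpath_path u p : dpath u p -> is_path_from E u p.
Proof.
elim: p u => [|[[x a] y] p IH] u //=.
by case=> -> [[He _] H]; split => //; split => //; apply: IH.
Qed.

Lemma dpath_red u p : dpath u p -> reduced_path inv p.
Proof.
elim: p u => [|[[x a] y] p IH] u //=.
case=> _ [[_ Hd] H]; case: p IH H => [|[[x' b] z] p] IH //= H.
case: H => Hx [HD H]; split; last by apply: (IH y).
by case: HD => _ Hd' [Hx' [_ Hz]]; subst; lia.
Qed.

Lemma dpath_cat u p q : dpath u (p ++ q) <-> dpath u p /\ dpath (path_end u p) q.
Proof.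
elim: p u => [|[[x0 a0] y0] p IH] u /=; first by split; [|case].
rewrite IH; split; [case=> -> [H [? ?]] | case=> [[-> [H ?]] ?]]; by [].
Qed.

Lemma dpath_rcons u p x a y : dpath u (rcons p (x,a,y)) <-> [/\ dpath u p, x = path_end u p & D x a y].
Proof.
rewrite -cats1 dpath_cat /=; split; first by case=> ? [-> [? _]].
by case=> ? -> ?.
Qed.

Lemma Pth_dpath p : dpath r p -> Pth (path_end r p) = p.
Proof. by move=> H; rewrite -Pth_uniq //; [apply: dpath_path | apply: dpath_red H]. Qed.

Lemma dpath_Pth v : dpath r (Pth v).
Proof.
suff H : forall p w, Pth w = p -> dpath r p by apply: H (erefl _).
clear v; move=> p; elim/last_ind: p => [|p [[x a] y] IH] v Hv //.
case: (Pth_rcons Hv) => Hx Hxe Hy He.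
apply/dpath_rcons; split => //; first by apply: (IH x).
by subst y; split => //; rewrite /dep Hv Hx size_rcons.
Qed.

Lemma walk_rcons u v n a w : walk E u v n -> E v a w -> walk E u w n.+1.
Proof.
elim=> [x|x b y z m Hxy Hw IH] H; first by apply: walkS H (walk0 _ _).
by apply: walkS Hxy (IH H).
Qed.

Lemma walk_cat u v n w m : walk E u v n -> walk E v w m -> walk E u w (n + m).
Proof. by elim=> [x|x b y z k Hxy Hw IH] // H; apply: walkS Hxy (IH H). Qed.

Lemma walk_sym u v n : walk E u v n -> walk E v u n.
Proof.
elim=> [x|x b y z k Hxy Hw IH]; first exact: walk0.
by apply: walk_rcons IH (HE1 Hxy).
Qed.

Lemma path_walk u p : is_path_from E u p -> walk E u (path_end u p) (size p).
Proof.
elim: p u => [|[[x a] y] p IH] u /=; first by move=> _; apply: walk0.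
by case=> -> [He H]; apply: walkS He (IH _ H).
Qed.

Lemma walk_dep u x m : walk E u x m -> dep x <= dep u + m.
Proof.
elim=> [y|y b w z k Hyw Hw IH]; first by lia.
by case: (dep_edge Hyw); lia.
Qed.

Lemma walk_connect u v : exists n, walk E u v n.
Proof.
case: (Pth_spec u) => Hu _ Hue; case: (Pth_spec v) => Hv _ Hve.
have H1 := walk_sym (path_walk Hu); have H2 := path_walk Hv.
rewrite Hue in H1; rewrite Hve in H2.
by eexists; apply: walk_cat H1 H2.
Qed.

Definition bP (P : Prop) : bool := if excluded_middle_informative P then true else false.

Lemma bPE (P : Prop) : bP P <-> P.
Proof. by rewrite /bP; case: excluded_middle_informative. Qed.

Lemma level_ex u v : exists n, level E u v n.
Proof.
case: (walk_connect u v) => m Hm.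
have ex : exists n, bP (walk E u v n) by exists m; apply/bPE.
case: (ex_minnP ex) => n /bPE Hn Hmin; exists n; split => // k Hk.
by apply: Hmin; apply/bPE.
Qed.

Lemma level_uniq u v n m : level E u v n -> level E u v m -> n = m.
Proof. by case=> H1 H2 [H3 H4]; apply/eqP; rewrite eqn_leq H2 // H4. Qed.

Lemma level_r x : level E r x (dep x).
Proof.
case: (Pth_spec x) => Hx _ He; split.
  by have := path_walk Hx; rewrite He.
by move=> m /walk_dep; rewrite dep_r.
Qed.

Lemma walk_in_head P u x : walk_in E P u x -> P u.
Proof. by case. Qed.

Lemma walk_in_rcons P u y a x : walk_in E P u y -> E y a x -> P x -> walk_in E P u x.
Proof.
elim=> [z Pz|z b w t Pz Hzw Hw IH] H Px.
  by apply: walk_inS Pz H (walk_in0 _ Px).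
by apply: walk_inS Pz Hzw (IH H Px).
Qed.

Lemma walk0_eq u v : walk E u v 0 -> u = v.
Proof. by move=> H; inversion H. Qed.

Lemma cone_gen r' v n : level E r' v n ->
  (forall x m, sub v x -> walk E r' x m -> n <= m /\ (x <> v -> n < m)) ->
  (forall y a, ~ sub v y -> E v a y -> exists k, k < n /\ level E r' y k) ->
  (forall x, in_cone E r' v x <-> sub v x) /\ (forall x, frontier E r' v x <-> x = v).
Proof.
move=> Hv Ha Hb.
have C1 : forall x, in_cone E r' v x -> sub v x.
  move=> x [n0 [Hv0 Hw]]; move: Hw; rewrite -(level_uniq Hv Hv0) => Hw.
  suff : forall u t, walk_in E (fun x => exists k, level E r' x k /\ n <= k) u t -> sub v u -> sub v t.
    by move/(_ _ _ Hw (sub_refl v)).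
  move=> u0 t0; elim => // u a w t Pu Huw Hwt IH Hsu.
  apply: IH; apply: NNPP => Hn.
  case: (sub_edge_out Hsu Huw Hn) => Hu _; subst u.
  case: (Hb _ _ Hn Huw) => k [Hk Hlk].
  case: (walk_in_head Hwt) => k' [Hlk' Hnk']; have := level_uniq Hlk Hlk'; lia.
have C2 : forall x, sub v x -> in_cone E r' v x.
  move=> x [s Hs]; exists n; split => //.
  elim/last_ind: s x Hs => [|s [[y a] z] IH] x Hs.
    rewrite cats0 in Hs; rewrite (Pth_inj Hs); apply: walk_in0.
    by exists n; split.
  rewrite -rcons_cat in Hs; case: (Pth_rcons Hs) => Hy _ Hz He; subst z.
  apply: walk_in_rcons (IH _ Hy) He _.
  case: (level_ex r' x) => k Hk; exists k; split => //.
  have Hsx : sub v x by exists (rcons s (y,a,x)); rewrite Hs rcons_cat.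
  by case: (Ha x k Hsx (proj1 Hk)).
split => x; split; [exact: C1 | exact: C2 | |].
  case=> /C1 Hx [n' [Hv' Hx']]; move: Hx'; rewrite -(level_uniq Hv Hv') => Hx'.
  apply: NNPP => Hne; case: (Ha x n Hx (proj1 Hx')) => _ /(_ Hne); lia.
move=> ->; split; first by apply: C2; apply: sub_refl.
by exists n.
Qed.

Lemma cone_r v : (forall x, in_cone E r v x <-> sub v x) /\ (forall x, frontier E r v x <-> x = v).
Proof.
apply: cone_gen (level_r v) _ _.
  move=> x m /sub_dep [H1 H2] /walk_dep; rewrite dep_r add0n => H3.
  by split; [lia | move=> /H2; lia].
move=> y a Hn He; case: (sub_edge_out (sub_refl v) He Hn) => _ H.
exists (dep y); split; last exact: level_r.
by rewrite /dep H size_rcons.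
Qed.

Lemma walk_entry v y x m : walk E y x m -> ~ sub v y -> sub v x ->
  exists y0 a k k', [/\ ~ sub v y0, E y0 a v, walk E y y0 k, walk E v x k' & m = k + k'.+1].
Proof.
elim=> [z|z b w t k Hzw Hwt IH] Hn Hs; first by [].
case: (classic (sub v w)) => Hw.
  have He : E w (inv b) z by apply: HE1.
  case: (sub_edge_out Hw He Hn) => Hwv _; subst w.
  by exists z, b, 0, k; split => //; apply: walk0.
case: (IH Hw Hs) => y0 [a [k1 [k2 [H1 H2 H3 H4 H5]]]].
exists y0, a, k1.+1, k2; split => //; last by rewrite H5.
by apply: walkS Hzw H3.
Qed.

Lemma cone_r' r' v : ~ sub v r' -> exists n, level E r' v n /\
  (forall x, in_cone E r' v x <-> sub v x) /\ (forall x, frontier E r' v x <-> x = v).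
Proof.
move=> Hr; case: (level_ex r' v) => n Hv; exists n; split => //.
apply: (cone_gen Hv).
  move=> x m Hx Hw; case: (walk_entry Hw Hr Hx) => y0 [a [k [k' [H1 H2 H3 H4 H5]]]].
  have Hk : n <= k.+1 by case: Hv => _; apply; apply: walk_rcons H3 H2.
  split; first by lia.
  move=> Hne; case: k' H4 H5 => [|k'] H4 H5; last by lia.
  by exfalso; apply: Hne; rewrite (walk0_eq H4).
move=> y a Hn He.
case: (Hv) => Hw _; case: (walk_entry Hw Hr (sub_refl v)) => y0 [b [k [k' [H1 H2 H3 H4 H5]]]].
have He0 : E v (inv b) y0 by apply: HE1.
case: (sub_edge_out (sub_refl v) He0 H1) => _ Hp0.
case: (sub_edge_out (sub_refl v) He Hn) => _ Hp.
have Hy : y = y0 by apply: Pth_inj; move: Hp; rewrite Hp0 => /rcons_inj [].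
subst y0; case: (level_ex r' y) => k0 Hk0; exists k0; split => //.
by case: Hk0 => _ /(_ _ H3); lia.
Qed.


Section Det.
Hypothesis det : deterministic E.

Lemma D_det u a w w' : D u a w -> D u a w' -> w = w'.
Proof. by case=> H1 _ [H2 _]; apply: det H1 H2. Qed.

Inductive dw (u : V) : seq A -> V -> Prop :=
| dw0 : dw u [::] u
| dwS s x a y : dw u s x -> D x a y -> dw u (rcons s a) y.

Lemma dw_nil u x : dw u [::] x -> x = u.
Proof.
have : forall s, dw u s x -> s = [::] -> x = u.
  by move=> s; case => // s0 ? a ? _ _; case: s0.
by move=> H /H; apply.
Qed.

Lemma dw_rcons_inv u s a y : dw u (rcons s a) y -> exists x, dw u s x /\ D x a y.
Proof.
have : forall t, dw u t y -> t = rcons s a -> exists x, dw u s x /\ D x a y.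
  move=> t; case; first by case: s.
  by move=> s0 x b z H HD /rcons_inj [? ?]; subst; exists x.
by move=> H /H; apply.
Qed.

Lemma dw_cons1 u a s x : dw u (a :: s) x -> exists c, D u a c /\ dw c s x.
Proof.
elim/last_ind: s x => [|s b IH] x.
  move=> H; case: (@dw_rcons_inv u [::] a x H) => x0 [/dw_nil -> HD].
  by exists x; split => //; apply: dw0.
move=> H; case: (@dw_rcons_inv u (a :: s) b x H) => x0 [H0 HD].
case: (IH _ H0) => c [Hc Hc0]; exists c; split => //; apply: dwS Hc0 HD.
Qed.

Lemma dw_cons2 u a c s x : D u a c -> dw c s x -> dw u (a :: s) x.
Proof.
move=> HD; elim => [|s0 y b z H IH HD'].
  by apply: (@dwS u [::] u a c (dw0 u) HD).
by apply: (@dwS u (a :: s0) y b z IH HD').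
Qed.

Lemma dw_det u s x x' : dw u s x -> dw u s x' -> x = x'.
Proof.
move=> H; elim: H x' => [|s0 y a z H IH HD] x' H'; first by rewrite (dw_nil H').
case: (dw_rcons_inv H') => y' [H1 H2]; rewrite -(IH _ H1) in H2.
exact: D_det HD H2.
Qed.

Definition L u s := exists x, dw u s x.
Definition Leq u w := forall s, L u s <-> L w s.

Lemma Leq_sym u w : Leq u w -> Leq w u.
Proof. by move=> H s; split => /H. Qed.

Lemma Leq_trans u v w : Leq u v -> Leq v w -> Leq u w.
Proof. by move=> H1 H2 s; split => [/H1 /H2|/H2 /H1]. Qed.

Lemma Leq_childex u w a c : Leq u w -> D u a c -> exists c', D w a c'.
Proof.
move=> H HD; have : L u [:: a] by exists c; apply: dw_cons2 HD (dw0 c).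
by case/H => x /dw_cons1 [c' [Hc' _]]; exists c'.
Qed.

Lemma Leq_child1 u w a c c' : Leq u w -> D u a c -> D w a c' -> forall s, L c s -> L c' s.
Proof.
move=> H HD HD' s [x Hx]; have : L u (a :: s) by exists x; apply: dw_cons2 HD Hx.
case/H => y /dw_cons1 [c'' [Hc'' Hy]].
by rewrite (D_det HD' Hc''); exists y.
Qed.

Lemma Leq_child u w a c c' : Leq u w -> D u a c -> D w a c' -> Leq c c'.
Proof.
move=> H HD HD' s; split; first exact: Leq_child1 H HD HD' s.
exact: Leq_child1 (Leq_sym H) HD' HD s.
Qed.

Lemma dw_sub v s x : dw v s x -> sub v x.
Proof. by elim => [|s0 y a z _ IH HD]; [apply: sub_refl | apply: sub_D IH HD]. Qed.

Definition lab (e : V * A * V) := e.1.2.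

Lemma dw_dpath u s x : dw u s x -> exists p, [/\ dpath u p, map lab p = s & path_end u p = x].
Proof.
elim => [|s0 y a z _ [p [Hp Hs He]] HD]; first by exists [::].
exists (rcons p (y,a,z)); split.
- by apply/dpath_rcons; split.
- by rewrite map_rcons Hs.
- by rewrite path_end_rcons.
Qed.

Lemma dpath_dw u p : dpath u p -> dw u (map lab p) (path_end u p).
Proof.
elim/last_ind: p => [|p [[x a] y] IH] /=; first by move=> _; apply: dw0.
case/dpath_rcons => Hp Hx HD; rewrite map_rcons path_end_rcons.
by apply: dwS (IH Hp) _; rewrite -Hx.
Qed.

Definition word v x := map lab (drop (dep v) (Pth x)).

Lemma sub_dw v x : sub v x -> dw v (word v x) x.
Proof.
case=> s Hs; rewrite /word Hs drop_size_cat //.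
have := dpath_Pth x; rewrite Hs => /dpath_cat [_]; rewrite Pth_end => H.
have := dpath_dw H; suff -> : path_end v s = x by [].
by rewrite -{1}(Pth_end v) -path_end_cat -Hs Pth_end.
Qed.

Lemma dw_word w s y : dw w s y -> word w y = s.
Proof.
case/dw_dpath => p [Hp Hs He].
have H : dpath r (Pth w ++ p) by apply/dpath_cat; rewrite Pth_end; split => //; apply: dpath_Pth.
have := Pth_dpath H; rewrite path_end_cat Pth_end He => Hy.
by rewrite /word Hy drop_size_cat.
Qed.

Definition child u a : V :=
  match excluded_middle_informative (exists c, D u a c) with
  | left H => proj1_sig (constructive_indefinite_description _ H)
  | right _ => u
  end.

Lemma child_D u a c : D u a c -> child u a = c.
Proof.
move=> HD; rewrite /child; case: excluded_middle_informative => [H|H].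
  by case: (constructive_indefinite_description _ H) => c' /= Hc'; apply: D_det Hc' HD.
by exfalso; apply: H; exists c.
Qed.

Definition rdw u (s : seq A) := foldl child u s.

Lemma dw_rdw u s x : dw u s x -> rdw u s = x.
Proof. by elim => [|s0 y a z _ IH HD] //; rewrite /rdw foldl_rcons -/(rdw u s0) IH (child_D HD). Qed.

Lemma end_iso_sym r' v w : end_isomorphic E r' v w -> end_isomorphic E r' w v.
Proof.
case=> f [g [H1 H2 H3 H4]]; exists g, f; split => //.
  move=> x a y cx cy; case: (H2 x cx) => cgx fgx; case: (H2 y cy) => cgy fgy.
  have := H3 _ a _ cgx cgy; rewrite fgx fgy => H; split; [exact: (proj2 H) | exact: (proj1 H)].
move=> y cy; case: (H2 y cy) => cgy fgy.
have := H4 _ cgy; rewrite fgy => H; split; [exact: (proj2 H) | exact: (proj1 H)].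
Qed.

Lemma end_iso_trans r' v u w : end_isomorphic E r' v u -> end_isomorphic E r' u w ->
  end_isomorphic E r' v w.
Proof.
case=> f1 [g1 [H1 H2 H3 H4]]; case=> f2 [g2 [K1 K2 K3 K4]].
exists (fun x => f2 (f1 x)), (fun y => g1 (g2 y)); split.
- move=> x cx; case: (H1 x cx) => c1 e1; case: (K1 _ c1) => c2 e2.
  by split => //; rewrite e2.
- move=> y cy; case: (K2 y cy) => c1 e1; case: (H2 _ c1) => c2 e2.
  by split => //; rewrite e2.
- move=> x a y cx cy; case: (H1 x cx) => c1 _; case: (H1 y cy) => c2 _.
  have h1 := H3 x a y cx cy; have h2 := K3 _ a _ c1 c2; tauto.
- move=> x cx; case: (H1 x cx) => c1 _.
  have h1 := H4 x cx; have h2 := K4 _ c1; tauto.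
Qed.

Lemma EI r' v w : ~ sub v r' -> ~ sub w r' -> end_isomorphic E r' v w -> forall s, L v s -> L w s.
Proof.
move=> Hv Hw [f [g [H1 H2 H3 H4]]].
case: (cone_r' Hv) => n [Hlv [Cv Fv]]; case: (cone_r' Hw) => m [Hlw [Cw Fw]].
have cv : in_cone E r' v v by apply/Cv; apply: sub_refl.
have Hfv : f v = w by apply/Fw; apply/(H4 v cv); apply/Fv.
suff key : forall s x, dw v s x -> dw w s (f x) by move=> s [x /key Hx]; exists (f x).
move=> s x; elim => [|s0 x0 a y Hx IH Dxy]; first by rewrite Hfv; apply: dw0.
have sx := dw_sub Hx; have sy := sub_D sx Dxy.
have cx : in_cone E r' v x0 by apply/Cv.
have cy : in_cone E r' v y by apply/Cv.
have Efxy : E (f x0) a (f y) by apply/(H3 x0 a y cx cy); case: Dxy.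
have sfx : sub w (f x0) by apply/Cw; case: (H1 x0 cx).
have sfy : sub w (f y) by apply/Cw; case: (H1 y cy).
case: (dep_edge Efxy) => Hd; first by apply: dwS IH _; split.
exfalso.
case/lastP: s0 Hx IH => [|s' b] Hx IH.
  have Hx0 := dw_nil Hx; subst x0; rewrite Hfv in Hd.
  by case: (sub_dep sfy); lia.
case: (dw_rcons_inv Hx) => x' [Hx' Dx'x]; case: (dw_rcons_inv IH) => z [Hz Dzfx].
have cx' : in_cone E r' v x' by apply/Cv; apply: dw_sub Hx'.
have E1 : E (f x0) (inv b) (f x') by apply/(H3 x0 (inv b) x' cx cx'); apply: HE1; case: Dx'x.
have E2 : E (f x0) (inv b) z by apply: HE1; case: Dzfx.
have Hz' : z = f x' := det E2 E1.
have P1 := up_Pth Efxy Hd; have P2 := D_Pth Dzfx.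
have Hyz : f y = z by apply: Pth_inj; move: P2; rewrite P1 => /rcons_inj [].
have Hyx' : y = x'.
  by case: (H1 y cy) => _ <-; case: (H1 x' cx') => _ <-; rewrite Hyz Hz'.
subst y; case: Dxy => _; case: Dx'x => _; lia.
Qed.

Section Phi.
Variables (v w : V).
Hypothesis Hvw : Leq v w.

Definition phi x := rdw w (word v x).

Lemma phi_prop x : sub v x -> [/\ dw w (word v x) (phi x), sub w (phi x) & word w (phi x) = word v x].
Proof.
move=> sx; have : L v (word v x) by exists x; apply: sub_dw.
case/Hvw => y Hy; rewrite /phi (dw_rdw Hy); split => //.
  exact: dw_sub Hy.
exact: dw_word Hy.
Qed.

Lemma phi_D x a y : sub v x -> D x a y -> D (phi x) a (phi y).
Proof.
move=> sx HD; have Hy : dw v (rcons (word v x) a) y by apply: dwS (sub_dw sx) HD.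
have Hwy := dw_word Hy.
have : L v (rcons (word v x) a) by exists y.
case/Hvw => y' Hy'; case: (dw_rcons_inv Hy') => z [Hz HDz].
have -> : phi x = z by case: (phi_prop sx) => H _ _; apply: dw_det H Hz.
by have -> : phi y = y' by rewrite /phi Hwy (dw_rdw Hy').
Qed.

Lemma phi_E x a y : sub v x -> sub v y -> E x a y -> E (phi x) a (phi y).
Proof.
move=> sx sy He; case: (dep_edge He) => Hd.
  by case: (phi_D sx (conj He Hd)).
have HD : D y (inv a) x by split => //; apply: HE1.
by apply: HE2; case: (phi_D sy HD).
Qed.

Lemma phi_v : phi v = w.
Proof. by rewrite /phi /word drop_size. Qed.

End Phi.

Lemma Leq_endiso v w : Leq v w -> end_isomorphic E r v w.
Proof.
move=> Hvw; have Hwv := Leq_sym Hvw.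
case: (cone_r v) => Cv Fv; case: (cone_r w) => Cw Fw.
have inv1 : forall x, sub v x -> phi w v (phi v w x) = x.
  by move=> x sx; case: (phi_prop Hvw sx) => _ _ Hw; rewrite /phi Hw; apply: dw_rdw; apply: sub_dw.
have inv2 : forall y, sub w y -> phi v w (phi w v y) = y.
  by move=> y sy; case: (phi_prop Hwv sy) => _ _ Hw; rewrite /phi Hw; apply: dw_rdw; apply: sub_dw.
exists (phi v w), (phi w v); split.
- move=> x /Cv sx; split; last exact: inv1.
  by apply/Cw; case: (phi_prop Hvw sx).
- move=> y /Cw sy; split; last exact: inv2.
  by apply/Cv; case: (phi_prop Hwv sy).
- move=> x a y /Cv cx /Cv cy; split; first exact: (phi_E Hvw).
  move=> He; rewrite -(inv1 _ cx) -(inv1 _ cy); apply: (phi_E Hwv) He.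
    by case: (phi_prop Hvw cx).
  by case: (phi_prop Hvw cy).
- move=> x /Cv sx; rewrite Fv Fw; split; first by move=> ->; apply: phi_v.
  by move=> Hx; rewrite -(inv1 _ sx) Hx phi_v.
Qed.

Lemma finite_classes r' n (rep : 'I_n -> V)
  (Hrep : forall v, exists i, end_isomorphic E r' v (rep i)) :
  exists (J : finType) (rep2 : J -> V), forall v, exists j, Leq v (rep2 j).
Proof.
pose pickv (i : 'I_n) : V :=
  match excluded_middle_informative (exists v, ~ sub v r' /\ end_isomorphic E r' v (rep i)) with
  | left H => proj1_sig (constructive_indefinite_description _ H)
  | right _ => r
  end.
pose rep2 (j : ('I_n + 'I_(dep r').+1)%type) : V :=
  match j with inl i => pickv i | inr k => path_end r (take k (Pth r')) end.
exists ('I_n + 'I_(dep r').+1)%type, rep2 => v.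
case: (classic (sub v r')) => Hs.
  case: (Hs) => s Hs'; have Hk : dep v < (dep r').+1 by rewrite /dep Hs' size_cat; lia.
  exists (inr (Ordinal Hk)); rewrite /rep2 /=.
  have -> : take (dep v) (Pth r') = Pth v by rewrite Hs' take_size_cat.
  by rewrite Pth_end.
case: (Hrep v) => i Hi; exists (inl i); rewrite /rep2 /pickv.
case: excluded_middle_informative => [H|H]; last by exfalso; apply: H; exists v.
case: (constructive_indefinite_description _ H) => v' /= [Hv' Hei].
have Hvv' : end_isomorphic E r' v v' := end_iso_trans Hi (end_iso_sym Hei).
move=> s; split; [exact: EI Hs Hv' Hvv' s | exact: EI Hv' Hs (end_iso_sym Hvv') s].
Qed.

Section Aut.
Variables (J : finType) (rep2 : J -> V).
Hypothesis Hrep2 : forall v, exists j, Leq v (rep2 j).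

Definition j0 : J := proj1_sig (constructive_indefinite_description _ (Hrep2 r)).

Definition cls v : J := odflt j0 [pick j | bP (Leq v (rep2 j))].

Lemma cls_spec v : Leq v (rep2 (cls v)).
Proof.
rewrite /cls; case: pickP => [j /bPE //|H].
exfalso; case: (Hrep2 v) => j Hj; have := H j; by rewrite (proj2 (bPE _) Hj).
Qed.

Lemma cls_eq v w : Leq v w -> cls v = cls w.
Proof.
move=> Hvw; rewrite /cls; congr (odflt _ _); apply: eq_pick => j.
apply/idP/idP => /bPE H; apply/bPE.
  exact: Leq_trans (Leq_sym Hvw) H.
exact: Leq_trans Hvw H.
Qed.

Definition Tr (j : J) (a : A) : option J :=
  match excluded_middle_informative (exists c, D (rep2 j) a c) with
  | left H => Some (cls (proj1_sig (constructive_indefinite_description _ H)))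
  | right _ => None
  end.

Lemma T_D x a y : D x a y -> Tr (cls x) a = Some (cls y).
Proof.
move=> HD; have Hx := cls_spec x; case: (Leq_childex Hx HD) => c' Hc'.
rewrite /Tr; case: excluded_middle_informative => [H|H]; last by exfalso; apply: H; exists c'.
case: (constructive_indefinite_description _ H) => c /= Hc.
by congr Some; symmetry; apply: cls_eq; exact: Leq_child Hx HD Hc.
Qed.

Lemma T_some x a q : Tr (cls x) a = Some q -> exists y, D x a y /\ cls y = q.
Proof.
rewrite /Tr; case: excluded_middle_informative => [H|H] //.
case: (constructive_indefinite_description _ H) => c /= Hc [<-].
have Hs := Leq_sym (cls_spec x); case: (Leq_childex Hs Hc) => y Hy.
by exists y; split => //; symmetry; apply: cls_eq; exact: Leq_child Hs Hc Hy.
Qed.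

Lemma Tr_red : reduced_pdfa inv Tr.
Proof.
move=> q1 q2 q3 a; rewrite {1}/Tr; case: excluded_middle_informative => [H|H] //.
case: (constructive_indefinite_description _ H) => c /= Hc [<-] H2.
case: (T_some H2) => y [Hy _].
have E1 : E c (inv a) (rep2 q1) by apply: HE1; case: Hc.
have Hyq := det (D_E Hy) E1; subst y.
by case: Hc Hy => _ ? [_ ?]; lia.
Qed.

Definition h (e : V * A * V) : J * A * J := (cls e.1.1, e.1.2, cls e.2).

Lemma run_dpath u p : dpath u p -> is_run Tr (cls u) (map h p).
Proof.
elim: p u => [|[[x a] y] p IH] u //=.
by case=> -> [HD Hp]; rewrite eqxx (T_D HD) eqxx /=; apply: IH.
Qed.

Definition F v : run Tr (cls r) := exist _ (map h (Pth v)) (run_dpath (dpath_Pth v)).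

Definition G (s : run Tr (cls r)) : V := rdw r (map (fun e => e.1.2) (sval s)).

Lemma labs_h p : map (fun e : J * A * J => e.1.2) (map h p) = map lab p.
Proof. by elim: p => //= e p ->. Qed.

Lemma run_lift u s : is_run Tr (cls u) s ->
  exists p, [/\ dpath u p, map h p = s & path_end u p = rdw u (map (fun e => e.1.2) s)].
Proof.
elim: s u => [|[[q1 a] q2] s IH] u /=; first by exists [::].
case/and3P => /eqP -> /eqP HT Hs; case: (T_some HT) => y [HD Hy].
subst q2; case: (IH _ Hs) => p [Hp Hm He].
exists ((u,a,y) :: p); split => /=; first by [].
  by rewrite Hm.
by rewrite He /rdw /= (child_D HD).
Qed.

Lemma F_rcons u v tau : sval (F v) = rcons (sval (F u)) tau -> E u tau.1.2 v.
Proof.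
rewrite /=; case: (seq_lastP (Pth v)) => [Hp|[p [[[x b] y] Hp]]].
  by rewrite Hp => /(congr1 size); rewrite size_rcons.
rewrite Hp map_rcons => /rcons_inj [Hm <-] /=.
case: (Pth_rcons Hp) => Hx _ Hy He; subst y.
suff -> : u = x by [].
have : G (F u) = G (F x) by rewrite /G /= Hx Hm.
have GF : forall w, G (F w) = w.
  by move=> w; rewrite /G /= labs_h (dw_rdw (dpath_dw (dpath_Pth w))) Pth_end.
by rewrite !GF.
Qed.

Lemma aut_iso : rooted_iso E r (@run_edge A inv J Tr (cls r)) (run_root Tr (cls r)).
Proof.
have GF : forall w, G (F w) = w.
  by move=> w; rewrite /G /= labs_h (dw_rdw (dpath_dw (dpath_Pth w))) Pth_end.
exists F, G; split => //.
- move=> s; apply: run_eq; case: s => s Hs /=.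
  case: (run_lift Hs) => p [Hp Hm He].
  by rewrite /G /= -He Pth_dpath // Hm.
- by apply: run_eq; rewrite /= Pth_r.
move=> u a v; split.
  move=> He; case: (dep_edge He) => Hd.
    left; exists (h (u,a,v)); split => //.
    by rewrite /= (D_Pth (conj He Hd)) map_rcons.
  right; exists (h (v, inv a, u)); split; last by rewrite /= inv_invol.
  by rewrite /= (up_Pth He Hd) map_rcons.
case=> [[tau [Hs Ht]] | [tau [Hs Ht]]].
  by rewrite -Ht; apply: F_rcons Hs.
by apply: HE2; rewrite -Ht inv_invol; apply: F_rcons Hs.
Qed.

End Aut.

Lemma forward r' n (rep : 'I_n -> V)
  (Hrep : forall v, exists i, end_isomorphic E r' v (rep i)) :
  exists (Q : finType) (T : Q -> A -> option Q) (p : Q),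
    reduced_pdfa inv T /\ rooted_iso E r (@run_edge A inv Q T p) (run_root T p).
Proof.
case: (finite_classes Hrep) => J [rep2 Hrep2].
exists J, (Tr Hrep2), (cls Hrep2 r); split; [exact: Tr_red | exact: aut_iso].
Qed.

End Det.

Section Back.
Variables (Q : finType) (T : Q -> A -> option Q) (p : Q).
Hypothesis red : reduced_pdfa inv T.
Variables (f : V -> run T p) (g : run T p -> V).
Hypotheses (fK : cancel f g) (gK : cancel g f) (fr : f r = run_root T p)
  (Hedge : forall u a v, E u a v <-> run_edge inv (f u) a (f v)).

Lemma is_run_cat q s1 s2 : is_run T q (s1 ++ s2) = is_run T q s1 && is_run T (path_end q s1) s2.
Proof.
elim: s1 q => [|[[q1 a] q2] s1 IH] q //=.
by rewrite IH !andbA.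
Qed.

Lemma is_run_rcons q s q1 a q2 :
  is_run T q (rcons s (q1,a,q2)) = [&& is_run T q s, q1 == path_end q s & T q1 a == Some q2].
Proof. by rewrite -cats1 is_run_cat /= andbT. Qed.

Lemma fwd_eq (x y y' : run T p) t t' :
  sval y = rcons (sval x) t -> sval y' = rcons (sval x) t' -> t.1.2 = t'.1.2 -> sval y = sval y'.
Proof.
case: t => [[q1 b] q2]; case: t' => [[q1' b'] q2'] /= Hy Hy' Hb; subst b'.
have := proj2_sig y; rewrite Hy is_run_rcons => /and3P [_ /eqP e1 /eqP e2].
have := proj2_sig y'; rewrite Hy' is_run_rcons => /and3P [_ /eqP e1' /eqP e2'].
have Hq : q1' = q1 by rewrite e1 e1'.
rewrite Hq e2 in e2'; rewrite Hq; by case: e2' => ->.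
Qed.

Lemma fb_false (x y z : run T p) t t' :
  sval y = rcons (sval x) t -> sval x = rcons (sval z) t' -> t.1.2 = inv t'.1.2 -> False.
Proof.
case: t => [[q1 b] q2]; case: t' => [[q1' b'] q2'] /= Hy Hx Hb; subst b.
have := proj2_sig y; rewrite Hy is_run_rcons Hx path_end_rcons => /and3P [_ /eqP e1 /eqP e2].
have := proj2_sig x; rewrite Hx is_run_rcons => /and3P [_ _ /eqP e2'].
subst q1; exact: red e2' e2.
Qed.

Lemma det_back : deterministic E.
Proof.
move=> u a v v' /Hedge H1 /Hedge H2; apply: (can_inj fK); apply: run_eq.
case: H1 => [[t [Ht Hta]] | [t [Ht Hta]]]; case: H2 => [[t' [Ht' Hta']] | [t' [Ht' Hta']]].
- by apply: fwd_eq Ht Ht' _; rewrite Hta Hta'.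
- by exfalso; apply: fb_false Ht Ht' _; rewrite Hta Hta'.
- by exfalso; apply: fb_false Ht' Ht _; rewrite Hta Hta'.
- by move: Ht'; rewrite Ht => /rcons_inj [].
Qed.

Lemma size_f x : size (sval (f x)) = dep x.
Proof.
suff H : forall k x, dep x <= k -> size (sval (f x)) = dep x by apply: (H _ x (leqnn _)).
elim=> [|k IH] {}x Hx.
  have H0 : Pth x = [::] by move: Hx; rewrite /dep; case: (Pth x).
  by rewrite -(Pth_end x) H0 /= fr /dep Pth_r.
case: (ltnP (dep x) k.+1) => Hk; first by apply: IH.
have Hdx : dep x = k.+1 by lia.
case: (seq_lastP (Pth x)) => [Hp|[p0 [[[y a] z] Hp]]].
  by move: Hdx; rewrite /dep Hp.
case: (Pth_rcons Hp) => Hy _ Hz He; subst z.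
have Hdy : dep y = k by move: Hdx; rewrite /dep Hp Hy size_rcons; case.
have IHy := IH y (eq_leq Hdy).
case/Hedge: He => [[t [Ht _]] | [t [Ht _]]].
  by rewrite Ht size_rcons IHy Hdy Hdx.
exfalso.
case: (seq_lastP (Pth y)) => [Hq|[p1 [[[z b] y'] Hq]]].
  by move: IHy; rewrite Ht size_rcons /dep Hq.
case: (Pth_rcons Hq) => Hz _ Hy' He'; subst y'.
have Hdz : dep z = k.-1 by rewrite -Hdy /dep Hq Hz size_rcons.
have IHz := IH z (leq_trans (eq_leq Hdz) (leq_pred k)).
case/Hedge: (HE1 He') => [[t' [Ht' _]] | [t' [Ht' _]]].
  by move: IHz; rewrite Ht' size_rcons IHy Hdz Hdy; lia.
have Hzx : z = x.
  apply: (can_inj fK); apply: run_eq; move: Ht'; rewrite Ht => /rcons_inj [] //.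
subst z; lia.
Qed.

Lemma D_fwd x a y : D x a y -> exists t, sval (f y) = rcons (sval (f x)) t /\ t.1.2 = a.
Proof.
case=> He Hd; case/Hedge: He => [//|[t [Ht _]]].
by exfalso; have := congr1 size Ht; rewrite size_rcons !size_f Hd; lia.
Qed.

Definition st x := path_end p (sval (f x)).

Lemma L_run x s : L x s <-> exists sg, is_run T (st x) sg /\ map (fun e => e.1.2) sg = s.
Proof.
split.
  case=> y Hy.
  have : exists sg, sval (f y) = sval (f x) ++ sg /\ map (fun e => e.1.2) sg = s.
    elim: Hy => [|s0 y0 a z _ [sg [Hs Hm]] HD]; first by exists [::]; rewrite cats0.
    case: (D_fwd HD) => t [Ht Hta]; exists (rcons sg t); split.
      by rewrite Ht Hs rcons_cat.
    by rewrite map_rcons Hm Hta.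
  case=> sg [Hs Hm]; exists sg; split => //.
  by have := proj2_sig (f y); rewrite Hs is_run_cat => /andP [].
case=> sg [Hr <-].
suff : exists y, dw x (map (fun e => e.1.2) sg) y /\ sval (f y) = sval (f x) ++ sg.
  by case=> y [Hy _]; exists y.
elim/last_ind: sg Hr => [|sg [[q1 a] q2] IH] Hr.
  by exists x; split; [apply: dw0 | rewrite cats0].
move: Hr; rewrite is_run_rcons => /and3P [Hr /eqP Hq1 /eqP HT].
case: (IH Hr) => y [Hy Hfy].
have Hrho : is_run T p (rcons (sval (f y)) (q1,a,q2)).
  rewrite is_run_rcons (proj2_sig (f y)) /= HT eqxx andbT.
  by rewrite Hfy path_end_cat Hq1.
pose rho : run T p := exist (fun s => is_run T p s) (rcons (sval (f y)) (q1,a,q2)) Hrho.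
pose z := g rho.
have Hfz : f z = rho by rewrite /z gK.
have Eyz : E y a z by apply/Hedge; left; exists (q1,a,q2); rewrite Hfz.
have Dyz : D y a z.
  split => //; rewrite -!size_f Hfz /= size_rcons //.
exists z; split.
  by rewrite map_rcons; apply: dwS Hy Dyz.
by rewrite Hfz /= Hfy rcons_cat.
Qed.

Lemma Leq_st x y : st x = st y -> Leq x y.
Proof. by move=> H s; rewrite !L_run H. Qed.

Lemma cf_back : context_free E.
Proof.
have det := det_back.
split.
  exists #|A| => u n h0 hinj hE.
  have inj : injective (fun i => (h0 i).1).
    move=> i j Hij; apply: hinj; have := hE i; have := hE j; rewrite /= Hij => H1 H2.
    by rewrite [h0 i]surjective_pairing [h0 j]surjective_pairing Hij (det _ _ _ _ H2 H1).
  by have := @leq_card _ _ _ inj; rewrite card_ord.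
pose rr (q : Q) : run T p :=
  match excluded_middle_informative (exists rho : run T p, path_end p (sval rho) = q) with
  | left H => proj1_sig (constructive_indefinite_description _ H)
  | right _ => run_root T p
  end.
exists r, #|Q|, (fun i => g (rr (enum_val i))) => v.
exists (enum_rank (st v)); apply: (Leq_endiso det); apply: Leq_st.
rewrite enum_rankK /st gK /rr; case: excluded_middle_informative => [H|H].
  by case: (constructive_indefinite_description _ H).
by exfalso; apply: H; exists (f v).
Qed.

End Back.

End Tree.

Theorem theorem3p9 (A : finType) (inv : A -> A) (inv_invol : involutive inv)
  (V : Type) (E : V -> A -> V -> Prop) (r : V)
  (HE : involutive_graph inv E) (Htree : is_tree inv E r) :
  (deterministic E /\ context_free E) <->
  exists (Q : finType) (T : Q -> A -> option Q) (p : Q),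
    reduced_pdfa inv T /\ rooted_iso E r (@run_edge A inv Q T p) (run_root T p).
Proof.
split.
  case=> det [_ [r' [n [rep Hrep]]]].
  exact: (forward inv_invol HE Htree det Hrep).
case=> Q [T [p [red [f [g [fK gK fr Hedge]]]]]].
split; [exact: (det_back red fK Hedge) | exact: (cf_back inv_invol HE Htree red fK gK fr Hedge)].
Qed.
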